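(* Let $\mathcal P\subset\nabla$ be a family of parameters. Suppose that for every $k\ge0$ the maximum $\max\{f(k;\lambda,\boldsymbol p):(\lambda,\boldsymbol p)\in\mathcal P\}$ is attained, and is attained (only) on $\mathcal P\cap\mathcal M_k$, where $\mathcal M_k=\{(\lambda,\boldsymbol p)\in\nabla:\lambda+\sum_ip_i=k\}$. Then the family $\mathcal P$ is cross modal.
   Context: $\nabla=\{(\lambda,\boldsymbol p):\lambda\ge0,\ 1\ge p_1\ge p_2\ge\dots\ge0,\ \sum_ip_i<\infty\}$. For $(\lambda,\boldsymbol p)\in\nabla$, $f(k;\lambda,\boldsymbol p)$ is the probability that $X+\sum_iB_i=k$ where $X\sim\mathrm{Poisson}(\lambda)$, $B_i\sim\mathrm{Bernoulli}(p_i)$ are independent. A mode of $f(\cdot;\lambda,\boldsymbol p)$ is any $k$ at which it attains its maximum. The family $\mathcal P$ is cross modal if for every $k\ge0$ the likelihood $(\lambda,\boldsymbol p)\mapsto f(k;\lambda,\boldsymbol p)$ attains its maximum over $\mathcal P$, and for every maximiser $(\lambda,\boldsymbol p)$, $k$ is a mode of $f(\cdot;\lambda,\boldsymbol p)$. *)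

(* Defs.v *)
From Stdlib Require Import Reals Lra Lia.
From Coquelicot Require Import Coquelicot.
Open Scope R_scope.

(* A parameter (lambda, p) ; p is indexed from 0 (p 0 = p_1 of the paper). *)
Definition param := (R * (nat -> R))%type.

Definition in_nabla (th : param) : Prop :=
  let (lam, p) := th in
  0 <= lam /\ p 0%nat <= 1 /\ (forall i, p (S i) <= p i) /\
  (forall i, 0 <= p i) /\ ex_series p.

Definition poisson_pmf (lam : R) (m : nat) : R :=
  exp (- lam) * lam ^ m / INR (Factorial.fact m).

(* Law of B_0 + ... + B_{n-1}, B_i ~ Bernoulli(p i) independent
   (Poisson-binomial law), via the convolution recursion. *)
Fixpoint pbinom_pmf (p : nat -> R) (n j : nat) : R :=
  match n with
  | O => match j with O => 1 | S _ => 0 end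
  | S n' => (1 - p n') * pbinom_pmf p n' j +
            match j with O => 0 | S j' => p n' * pbinom_pmf p n' j' end
  end.

(* Law of X + B_0 + ... + B_{n-1}, X ~ Poisson(lam) independent. *)
Definition fin_pmf (lam : R) (p : nat -> R) (n k : nat) : R :=
  sum_f_R0 (fun j => poisson_pmf lam (k - j) * pbinom_pmf p n j) k.

(* f(k; lam, p) = P(X + sum_i B_i = k), as the limit of the finite sums
   (the infinite sum converges a.s. since sum_i p_i < oo). *)
Definition f (k : nat) (th : param) : R :=
  real (Lim_seq (fun n => fin_pmf (fst th) (snd th) n k)).

Definition is_mode (th : param) (k : nat) : Prop :=
  forall j : nat, f j th <= f k th.

Definition is_maximiser (PP : param -> Prop) (k : nat) (th : param) : Prop :=
  PP th /\ forall th', PP th' -> f k th' <= f k th.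

Definition M (k : nat) (th : param) : Prop :=
  in_nabla th /\ fst th + Series (snd th) = INR k.

Definition cross_modal (PP : param -> Prop) : Prop :=
  forall k : nat,
    (exists th, is_maximiser PP k th) /\
    (forall th, is_maximiser PP k th -> is_mode th k).

(* Main.v *)
Require Import Defs.
From Stdlib Require Import Reals Lra Lia List FunctionalExtensionality.
From Coquelicot Require Import Coquelicot.
Import ListNotations.
Open Scope R_scope.

Definition prv (q : nat -> R) (j : nat) : R :=
  match j with O => 0 | S j' => q j' end.
Definition bconv (p : R) (q : nat -> R) (j : nat) : R := (1 - p) * q j + p * prv q j.
Definition plaw (lam : R) (l : list R) : nat -> R := fold_right bconv (poisson_pmf lam) l.
Fixpoint remn (i : nat) (l : list R) {struct l} : list R :=
  match l with
  | [] => []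
  | x :: l' => match i with O => l' | S i' => x :: remn i' l' end
  end.
Fixpoint fsum (n : nat) (f : nat -> R) : R :=
  match n with O => 0 | S n' => f O + fsum n' (fun i => f (S i)) end.
Definition sumL (l : list R) : R := fold_right Rplus 0 l.
Definition inU (l : list R) : Prop := List.Forall (fun x => 0 <= x <= 1) l.

Lemma bconv_comm a b q : bconv a (bconv b q) = bconv b (bconv a q).
Proof. extensionality j; destruct j; unfold bconv, prv; simpl; ring. Qed.

Lemma plaw_cons lam a l : plaw lam (a :: l) = bconv a (plaw lam l).
Proof. reflexivity. Qed.

Lemma plaw_rem lam l i : (i < length l)%nat ->
  plaw lam l = bconv (nth i l 0) (plaw lam (remn i l)).
Proof.
  revert i; induction l as [|a l IH]; intros i Hi; simpl in Hi; [lia|].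
  destruct i as [|i]; [reflexivity|].
  simpl remn; simpl nth. rewrite !plaw_cons. rewrite (IH i) by lia.
  apply bconv_comm.
Qed.

Lemma fsum_ext n f g : (forall i, (i < n)%nat -> f i = g i) -> fsum n f = fsum n g.
Proof.
  revert f g; induction n as [|n IH]; intros f g H; simpl; [reflexivity|].
  rewrite H by lia. f_equal. apply IH. intros i Hi. apply H. lia.
Qed.

Lemma fsum_plus n f g : fsum n (fun i => f i + g i) = fsum n f + fsum n g.
Proof.
  revert f g; induction n as [|n IH]; intros f g; simpl; [ring|].
  rewrite (IH (fun i => f (S i)) (fun i => g (S i))). ring.
Qed.

Lemma fsum_scal n c f : fsum n (fun i => c * f i) = c * fsum n f.
Proof.
  revert f; induction n as [|n IH]; intros f; simpl; [ring|].
  rewrite (IH (fun i => f (S i))). ring.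
Qed.

Lemma fsum_le n f g : (forall i, (i < n)%nat -> f i <= g i) -> fsum n f <= fsum n g.
Proof.
  revert f g; induction n as [|n IH]; intros f g H; simpl; [lra|].
  apply Rplus_le_compat. apply H; lia. apply IH. intros i Hi. apply H. lia.
Qed.

Lemma fsum_sumL l : fsum (length l) (fun i => nth i l 0) = sumL l.
Proof. induction l as [|a l IH]; simpl; [reflexivity|]. rewrite IH. reflexivity. Qed.

Lemma inU_rem l i : inU l -> inU (remn i l).
Proof.
  unfold inU; revert i; induction l as [|a l IH]; intros i H; simpl; [constructor|].
  inversion H; subst. destruct i; [assumption|]. constructor; auto.
Qed.

Lemma inU_nth l i : inU l -> 0 <= nth i l 0 <= 1.
Proof.
  unfold inU; revert i; induction l as [|a l IH]; intros i H; destruct i; simpl; try lra;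
  inversion H; subst; auto.
Qed.

Lemma length_rem l i : (i < length l)%nat -> length (remn i l) = pred (length l).
Proof.
  revert i; induction l as [|a l IH]; intros i H; simpl in *; [lia|].
  destruct i; [reflexivity|]. simpl. rewrite IH by lia. destruct l; simpl in *; lia.
Qed.

Lemma sumL_rem l i : (i < length l)%nat -> sumL (remn i l) = sumL l - nth i l 0.
Proof.
  revert i; induction l as [|a l IH]; intros i H; simpl in *; [lia|].
  destruct i; simpl; [ring|]. rewrite IH by lia. ring.
Qed.

Lemma sumL_nonneg l : inU l -> 0 <= sumL l.
Proof. unfold inU; induction 1; simpl; lra. Qed.

Lemma poisson_S lam m : poisson_pmf lam (S m) * INR (S m) = lam * poisson_pmf lam m.
Proof.
  unfold poisson_pmf. rewrite fact_simpl, mult_INR. simpl pow.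
  field. split. apply INR_fact_neq_0. apply not_0_INR. lia.
Qed.

Lemma poisson_nonneg lam m : 0 <= lam -> 0 <= poisson_pmf lam m.
Proof.
  intros H. unfold poisson_pmf. apply Rmult_le_pos.
  apply Rmult_le_pos. left; apply exp_pos. apply pow_le; auto.
  left; apply Rinv_0_lt_compat, INR_fact_lt_0.
Qed.

Lemma plaw_nonneg lam l j : 0 <= lam -> inU l -> 0 <= plaw lam l j.
Proof.
  intros Hl HU; unfold inU in HU; revert j; induction HU as [|a l Ha HU IH]; intros j; simpl.
  apply poisson_nonneg; auto.
  change (fold_right bconv (poisson_pmf lam) l) with (plaw lam l).
  unfold bconv, prv. destruct j.
  - specialize (IH 0%nat). nra.
  - pose proof (IH (S j)). pose proof (IH j). nra.
Qed.

Lemma fsum_zero n f : (forall i, (i < n)%nat -> f i = 0) -> fsum n f = 0.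
Proof.
  intros H. rewrite (fsum_ext n f (fun i => 0 * 0)).
  rewrite fsum_scal. ring. intros i Hi. rewrite H by auto. ring.
Qed.

Lemma stein lam l j :
  INR j * plaw lam l j =
  lam * prv (plaw lam l) j + fsum (length l) (fun i => nth i l 0 * prv (plaw lam (remn i l)) j).
Proof.
  revert j; induction l as [|a l IH]; intros j.
  - simpl fsum. destruct j; simpl prv.
    + simpl INR. ring.
    + simpl plaw. rewrite Rmult_comm, poisson_S. ring.
  - change (length (a :: l)) with (S (length l)).
    change (plaw lam (a :: l)) with (bconv a (plaw lam l)).
    cbn [fsum nth remn].
    set (Q := plaw lam l).
    destruct j as [|j].
    + simpl prv. rewrite fsum_zero. simpl INR. ring. intros; ring.
    + rewrite (fsum_ext _ _ (fun i => (1 - a) * (nth i l 0 * plaw lam (remn i l) j) +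
                                   a * (nth i l 0 * prv (plaw lam (remn i l)) j))).
      2:{ intros i Hi. simpl prv. unfold bconv. ring. }
      rewrite fsum_plus, !fsum_scal.
      pose proof (IH (S j)) as H1. pose proof (IH j) as H2. simpl prv in H1.
      fold Q in H1, H2. simpl prv. unfold bconv. simpl prv.
      rewrite S_INR in *.
      transitivity ((1 - a) * ((INR j + 1) * Q (S j)) + a * (INR j * Q j) + a * Q j).
      { ring. }
      rewrite H1, H2. ring.
Qed.

Definition PF (q : nat -> R) : Prop :=
  forall a b, (a <= b)%nat -> q a * q (S (S b)) <= q (S a) * q (S b).

Lemma PF_poisson lam : 0 <= lam -> PF (poisson_pmf lam).
Proof.
  intros Hl a b Hab.
  pose proof (poisson_S lam a) as E1. pose proof (poisson_S lam (S b)) as E2.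
  pose proof (poisson_nonneg lam a Hl). pose proof (poisson_nonneg lam (S b) Hl).
  assert (Ha : 0 < INR (S a)) by (apply lt_0_INR; lia).
  assert (Hb : INR (S a) <= INR (S (S b))) by (apply le_INR; lia).
  set (x := poisson_pmf lam a) in *. set (y := poisson_pmf lam (S b)) in *.
  set (u := poisson_pmf lam (S a)) in *. set (v := poisson_pmf lam (S (S b))) in *.
  set (A := INR (S a)) in *. set (B := INR (S (S b))) in *.
  assert (Hv : v = lam * y / B).
  { apply (Rmult_eq_reg_r B); [|lra]. rewrite E2. field. lra. }
  assert (Hu : u = lam * x / A).
  { apply (Rmult_eq_reg_r A); [|lra]. rewrite E1. field. lra. }
  rewrite Hu, Hv. unfold Rdiv.
  assert (0 < B) by lra.
  assert (/ B <= / A) by (apply Rinv_le_contravar; lra).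
  assert (0 <= lam * x * y) by (apply Rmult_le_pos; [apply Rmult_le_pos|]; lra).
  nra.
Qed.

Lemma PF_conv p q : (forall j, 0 <= q j) -> PF q -> 0 <= p <= 1 -> PF (bconv p q).
Proof.
  intros Hq HP Hp a b Hab. unfold bconv.
  assert (X1 : 0 <= q (S a) * q (S b) - q a * q (S (S b))) by (pose proof (HP a b Hab); lra).
  destruct a as [|a].
  - simpl prv.
    assert (X2 : 0 <= q 0%nat * q b) by (apply Rmult_le_pos; auto).
    assert (X3 : 0 <= q 1%nat * q b) by (apply Rmult_le_pos; auto).
    assert (E : (1 - p) * q (S 0) + p * q 0%nat = (1 - p) * q 1%nat + p * q 0%nat) by ring.
    assert (H0 : 0 <= p * (1 - p)) by nra.
    assert (H1 : 0 <= p * p) by nra.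
    assert (H2 : 0 <= (1-p) * (1 - p)) by nra.
    assert (Hid : ((1 - p) * q 1%nat + p * q 0%nat) * ((1 - p) * q (S b) + p * q b)
                  - ((1 - p) * q 0%nat + p * 0) * ((1 - p) * q (S (S b)) + p * q (S b))
                  = (1-p)*(1-p) * (q 1%nat * q (S b) - q 0%nat * q (S (S b)))
                    + p * p * (q 0%nat * q b) + p * (1-p) * (q 1%nat * q b)) by ring.
    assert (0 <= (1-p)*(1-p) * (q 1%nat * q (S b) - q 0%nat * q (S (S b)))) by (apply Rmult_le_pos; auto).
    assert (0 <= p * p * (q 0%nat * q b)) by (apply Rmult_le_pos; auto).
    assert (0 <= p * (1-p) * (q 1%nat * q b)) by (apply Rmult_le_pos; auto).
    simpl. lra.
  - destruct b as [|b]; [lia|].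
    simpl prv.
    assert (X2 : 0 <= q (S a) * q (S b) - q a * q (S (S b))) by (pose proof (HP a b ltac:(lia)); lra).
    assert (X3 : 0 <= q (S (S a)) * q (S b) - q a * q (S (S (S b)))).
    { assert (Y1 : q a * q (S (S (S b))) <= q (S a) * q (S (S b))) by (apply HP; lia).
      assert (Y2 : q (S a) * q (S (S b)) <= q (S (S a)) * q (S b)).
      { destruct (Nat.eq_dec a b) as [->|Hne]; [lra|]. apply HP; lia. }
      lra. }
    assert (Hid : ((1 - p) * q (S (S a)) + p * q (S a)) * ((1 - p) * q (S (S b)) + p * q (S b))
                  - ((1 - p) * q (S a) + p * q a) * ((1 - p) * q (S (S (S b))) + p * q (S (S b)))
                  = (1-p)*(1-p) * (q (S (S a)) * q (S (S b)) - q (S a) * q (S (S (S b))))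
                    + p * p * (q (S a) * q (S b) - q a * q (S (S b)))
                    + p * (1-p) * (q (S (S a)) * q (S b) - q a * q (S (S (S b))))) by ring.
    assert (0 <= (1-p)*(1-p) * (q (S (S a)) * q (S (S b)) - q (S a) * q (S (S (S b))))) by (apply Rmult_le_pos; nra).
    assert (0 <= p * p * (q (S a) * q (S b) - q a * q (S (S b)))) by (apply Rmult_le_pos; nra).
    assert (0 <= p * (1-p) * (q (S (S a)) * q (S b) - q a * q (S (S (S b))))) by (apply Rmult_le_pos; nra).
    lra.
Qed.

Lemma plaw_PF lam l : 0 <= lam -> inU l -> PF (plaw lam l).
Proof.
  intros Hl HU. induction l as [|a l IH]; simpl.
  - apply PF_poisson; auto.
  - inversion HU; subst. apply PF_conv; auto. intros j; apply plaw_nonneg; auto.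
Qed.

Lemma plaw_LC lam l j : 0 <= lam -> inU l ->
  prv (plaw lam l) j * plaw lam l (S j) <= plaw lam l j * plaw lam l j.
Proof.
  intros Hl HU. destruct j as [|j]; simpl prv.
  - pose proof (plaw_nonneg lam l 0 Hl HU). nra.
  - apply (plaw_PF lam l Hl HU j j). lia.
Qed.

Lemma decomp_diff lam l i j : (i < length l)%nat ->
  plaw lam l (S j) - plaw lam l j =
  (1 - nth i l 0) * (plaw lam (remn i l) (S j) - plaw lam (remn i l) j) +
  nth i l 0 * (plaw lam (remn i l) j - prv (plaw lam (remn i l)) j).
Proof.
  intros Hi. rewrite (plaw_rem lam l i Hi). unfold bconv at 1 2. simpl prv. ring.
Qed.

Lemma decomp_pt lam l i j : (i < length l)%nat ->
  plaw lam l j - prv (plaw lam (remn i l)) j =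
  (1 - nth i l 0) * (plaw lam (remn i l) j - prv (plaw lam (remn i l)) j).
Proof.
  intros Hi. rewrite (plaw_rem lam l i Hi). unfold bconv at 1. ring.
Qed.

Lemma I1 lam l j :
  fsum (length l) (fun i => nth i l 0 * (plaw lam l j - prv (plaw lam (remn i l)) j)) =
  (lam + sumL l - INR j) * plaw lam l j - lam * (plaw lam l j - prv (plaw lam l) j).
Proof.
  rewrite (fsum_ext _ _ (fun i => plaw lam l j * nth i l 0 + (-1) * (nth i l 0 * prv (plaw lam (remn i l)) j))).
  2:{ intros; ring. }
  rewrite fsum_plus, !fsum_scal, fsum_sumL.
  pose proof (stein lam l j). lra.
Qed.

Lemma fsum_head_le n f : (forall i, (i < S n)%nat -> 0 <= f i) -> f O <= fsum (S n) f.
Proof.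
  intros H. simpl. assert (0 <= fsum n (fun i => f (S i))).
  { rewrite <- (fsum_zero n (fun _ => 0)) by auto. apply fsum_le. intros i Hi. apply H. lia. }
  lra.
Qed.

Lemma Astar n : forall l lam j, length l = n -> 0 <= lam -> inU l ->
  lam + sumL l <= INR j -> plaw lam l (S j) <= plaw lam l j.
Proof.
  induction n as [|n IH]; intros l lam j Hlen Hl HU Hm.
  - destruct l; simpl in Hlen; [|lia]. simpl plaw. simpl in Hm.
    pose proof (poisson_S lam j) as E. pose proof (poisson_nonneg lam j Hl).
    rewrite S_INR in E. nra.
  - destruct l as [|a l']; simpl in Hlen; [lia|].
    set (L := a :: l') in *.
    set (q := plaw lam L).
    destruct (Rle_lt_dec (q (S j)) (q j)) as [ok|Hbad]; [exact ok|exfalso].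
    assert (Hlen' : length L = S n) by (simpl; lia).
    assert (C1 : forall i, (i < S n)%nat ->
              q (S j) - q j <= nth i L 0 * (plaw lam (remn i L) j - prv (plaw lam (remn i L)) j)).
    { intros i Hi.
      assert (Hi' : (i < length L)%nat) by lia.
      pose proof (inU_nth L i HU) as Hp.
      assert (IHi : plaw lam (remn i L) (S j) <= plaw lam (remn i L) j).
      { apply (IH (remn i L) lam j).
        - rewrite length_rem; lia.
        - exact Hl.
        - apply inU_rem; auto.
        - rewrite sumL_rem by auto. lra. }
      pose proof (decomp_diff lam L i j Hi') as D. fold q in D.
      assert (0 <= (1 - nth i L 0) * (plaw lam (remn i L) j - plaw lam (remn i L) (S j))).
      { apply Rmult_le_pos; lra. }
      lra. }
    assert (HG : prv q j <= q j).
    { pose proof (plaw_LC lam L j Hl HU) as LC. fold q in LC.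
      pose proof (plaw_nonneg lam L j Hl HU). fold q in H.
      assert (0 <= prv q j) by (destruct j; simpl; [lra| apply plaw_nonneg; auto]).
      nra. }
    pose proof (I1 lam L j) as E. fold q in E. rewrite Hlen' in E.
    assert (Hterm : forall i, (i < S n)%nat ->
              0 <= nth i L 0 * (q j - prv (plaw lam (remn i L)) j)).
    { intros i Hi. unfold q. rewrite (decomp_pt lam L i j) by lia.
      pose proof (C1 i Hi). pose proof (inU_nth L i HU).
      set (g := plaw lam (remn i L) j - prv (plaw lam (remn i L)) j) in *.
      replace (nth i L 0 * ((1 - nth i L 0) * g)) with ((1 - nth i L 0) * (nth i L 0 * g)) by ring.
      apply Rmult_le_pos; lra. }
    pose proof (fsum_head_le n _ Hterm) as Hh. rewrite E in Hh.
    pose proof (plaw_nonneg lam L j Hl HU) as Hq. fold q in Hq.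
    assert (Hrhs : (lam + sumL L - INR j) * q j - lam * (q j - prv q j) <= 0).
    { assert (0 <= lam * (q j - prv q j)) by (apply Rmult_le_pos; lra).
      assert ((lam + sumL L - INR j) * q j <= 0).
      { apply Rmult_le_0_r; lra. }
      lra. }
    pose proof (C1 O ltac:(lia)) as C0. simpl nth in C0. simpl remn in C0.
    unfold q in Hh. rewrite (decomp_pt lam L 0 j) in Hh by (simpl; lia). simpl nth in Hh. simpl remn in Hh.
    fold q in Hh.
    inversion HU as [|? ? Ha HU']; subst.
    assert (Ha1 : a = 1).
    { set (g := plaw lam l' j - prv (plaw lam l') j) in *.
      assert (a * ((1 - a) * g) <= 0) by lra.
      assert (0 < a * g) by lra.
      nra. }
    subst a.
    assert (Eq1 : q (S j) = plaw lam l' j) by (unfold q, L; rewrite plaw_cons; unfold bconv; simpl prv; ring).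
    assert (Eq2 : q j = prv (plaw lam l') j) by (unfold q, L; rewrite plaw_cons; unfold bconv; ring).
    destruct j as [|j].
    + unfold L in Hm; change (sumL (1 :: l')) with (1 + sumL l') in Hm.
      simpl INR in Hm. pose proof (sumL_nonneg l' HU'). lra.
    + simpl prv in Eq2.
      assert (plaw lam l' (S j) <= plaw lam l' j).
      { apply (IH l' lam j); auto. unfold L in Hm; change (sumL (1 :: l')) with (1 + sumL l') in Hm.
        rewrite S_INR in Hm. lra. }
      lra.
Qed.

Lemma Bstar n : forall l lam j, length l = n -> 0 <= lam -> inU l ->
  INR j <= lam + sumL l -> prv (plaw lam l) j <= plaw lam l j.
Proof.
  induction n as [|n IH]; intros l lam j Hlen Hl HU Hm.
  - destruct l; simpl in Hlen; [|lia]. simpl plaw. simpl in Hm.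
    destruct j as [|j]; simpl prv; [apply poisson_nonneg; auto|].
    pose proof (poisson_S lam j) as E. pose proof (poisson_nonneg lam j Hl).
    pose proof (poisson_nonneg lam (S j) Hl).
    rewrite S_INR in E, Hm. pose proof (pos_INR j). nra.
  - destruct j as [|j].
    { simpl prv. apply plaw_nonneg; auto. }
    destruct l as [|a l']; simpl in Hlen; [lia|].
    set (L := a :: l') in *.
    set (q := plaw lam L).
    simpl prv.
    destruct (Rle_lt_dec (q j) (q (S j))) as [ok|Hbad]; [exact ok|exfalso].
    assert (Hlen' : length L = S n) by (simpl; lia).
    assert (C1 : forall i, (i < S n)%nat ->
              nth i L 0 * (q (S j) - prv (plaw lam (remn i L)) (S j)) <= nth i L 0 * (q (S j) - q j)).
    { intros i Hi.
      assert (Hi' : (i < length L)%nat) by lia.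
      pose proof (inU_nth L i HU) as Hp.
      assert (IHi : prv (plaw lam (remn i L)) j <= plaw lam (remn i L) j).
      { apply (IH (remn i L) lam j).
        - rewrite length_rem; lia.
        - exact Hl.
        - apply inU_rem; auto.
        - rewrite sumL_rem by auto. rewrite S_INR in Hm. lra. }
      pose proof (decomp_diff lam L i j Hi') as D.
      unfold q. rewrite (decomp_pt lam L i (S j) Hi').
      change (prv (plaw lam (remn i L)) (S j)) with (plaw lam (remn i L) j).
      apply Rmult_le_compat_l; [lra|].
      assert (0 <= nth i L 0 * (plaw lam (remn i L) j - prv (plaw lam (remn i L)) j)).
      { apply Rmult_le_pos; lra. }
      lra. }
    pose proof (fsum_le _ _ _ C1) as S1.
    rewrite (fsum_ext (S n) (fun i => nth i L 0 * (q (S j) - q j))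
                      (fun i => (q (S j) - q j) * nth i L 0)) in S1 by (intros; ring).
    rewrite fsum_scal in S1. rewrite <- Hlen' in S1. rewrite fsum_sumL in S1.
    pose proof (I1 lam L (S j)) as E. fold q in E.
    change (prv q (S j)) with (q j) in E.
    rewrite E in S1.
    pose proof (plaw_nonneg lam L (S j) Hl HU) as Hq. fold q in Hq.
    assert (0 <= (lam + sumL L - INR (S j)) * q (S j)) by (apply Rmult_le_pos; lra).
    assert (1 <= INR (S j)) by (rewrite S_INR; pose proof (pos_INR j); lra).
    nra.
Qed.

Lemma mode_fin lam l k : 0 <= lam -> inU l -> lam + sumL l = INR k ->
  forall j, plaw lam l j <= plaw lam l k.
Proof.
  intros Hl HU Hm j.
  destruct (Nat.le_gt_cases k j) as [Hkj|Hjk].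
  - replace j with (k + (j - k))%nat by lia.
    induction (j - k)%nat as [|d IHd].
    + rewrite Nat.add_0_r. lra.
    + replace (k + S d)%nat with (S (k + d)) by lia.
      eapply Rle_trans; [|exact IHd].
      apply (Astar (length l) l lam (k + d)); auto.
      rewrite Hm. apply le_INR. lia.
  - replace j with (k - (k - j))%nat by lia.
    assert (Hd : (k - j <= k)%nat) by lia.
    induction (k - j)%nat as [|d IHd].
    + rewrite Nat.sub_0_r. lra.
    + eapply Rle_trans; [|apply IHd; lia].
      pose proof (Bstar (length l) l lam (k - d) eq_refl Hl HU) as HB.
      replace (k - d)%nat with (S (k - S d)) in HB by lia.
      simpl prv in HB. replace (k - d)%nat with (S (k - S d)) by lia.
      apply HB. rewrite Hm. apply le_INR. lia.
Qed.

Fixpoint lst (p : nat -> R) (n : nat) : list R :=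
  match n with O => [] | S n' => p n' :: lst p n' end.

Definition star (a b : nat -> R) (k : nat) : R :=
  sum_f_R0 (fun j => a (k - j)%nat * b j) k.

Lemma sumR_scal c f N : sum_f_R0 (fun i => c * f i) N = c * sum_f_R0 f N.
Proof. induction N; simpl; [ring|]. rewrite IHN. ring. Qed.

Lemma pbinom_S p n j : pbinom_pmf p (S n) j = bconv (p n) (pbinom_pmf p n) j.
Proof. destruct j; simpl; unfold bconv, prv; ring. Qed.

Lemma star_bconv a b p k : star a (bconv p b) k = bconv p (star a b) k.
Proof.
  unfold star, bconv.
  rewrite (sum_eq _ (fun j => (1 - p) * (a (k - j)%nat * b j) + p * (a (k - j)%nat * prv b j))).
  2:{ intros; ring. }
  rewrite plus_sum, !sumR_scal.
  destruct k as [|k].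
  - simpl. ring.
  - rewrite (decomp_sum (fun i => a (S k - i)%nat * prv b i)) by lia.
    simpl pred. simpl prv. rewrite Rmult_0_r, Rplus_0_l.
    f_equal.
Qed.


Lemma sum_only0 f N : (forall j, (0 < j)%nat -> f j = 0) -> sum_f_R0 f N = f 0%nat.
Proof.
  intros H. induction N as [|N IH]; simpl; [reflexivity|]. rewrite IH, (H (S N)) by lia. ring.
Qed.

Lemma fin_plaw lam p n k : fin_pmf lam p n k = plaw lam (lst p n) k.
Proof.
  revert k; induction n as [|n IH]; intros k.
  - unfold fin_pmf. rewrite sum_only0.
    + simpl. rewrite Nat.sub_0_r. ring.
    + intros j Hj. destruct j; [lia|]. simpl. ring.
  - unfold fin_pmf.
    rewrite (sum_eq _ (fun j => poisson_pmf lam (k - j) * bconv (p n) (pbinom_pmf p n) j)).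
    2:{ intros i Hi. rewrite pbinom_S. reflexivity. }
    change (star (poisson_pmf lam) (bconv (p n) (pbinom_pmf p n)) k = plaw lam (lst p (S n)) k).
    rewrite star_bconv. simpl lst. rewrite plaw_cons. unfold bconv.
    change (star (poisson_pmf lam) (pbinom_pmf p n) k) with (fin_pmf lam p n k).
    rewrite IH. f_equal. f_equal. destruct k; simpl; [reflexivity|].
    change (star (poisson_pmf lam) (pbinom_pmf p n) k) with (fin_pmf lam p n k).
    apply IH.
Qed.

Lemma pb_bounds p : (forall i, 0 <= p i <= 1) -> forall n j, 0 <= pbinom_pmf p n j <= 1.
Proof.
  intros Hp n. induction n as [|n IH]; intros j.
  - destruct j; simpl; lra.
  - rewrite pbinom_S. unfold bconv, prv. pose proof (Hp n). pose proof (IH j).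
    destruct j; [nra|]. pose proof (IH j). nra.
Qed.

Lemma lim_sum (u : nat -> nat -> R) (U : nat -> R) :
  (forall j, is_lim_seq (fun n => u n j) (U j)) ->
  forall N, is_lim_seq (fun n => sum_f_R0 (u n) N) (sum_f_R0 U N).
Proof.
  intros H N. induction N as [|N IH]; simpl.
  - apply H.
  - apply (is_lim_seq_plus' _ _ _ _ IH (H (S N))).
Qed.

Lemma pb_lim p : (forall i, 0 <= p i <= 1) -> ex_series p ->
  forall m, exists L : R, is_lim_seq (fun n => pbinom_pmf p n m) L.
Proof.
  intros Hp Hs m.
  set (d := fun n => pbinom_pmf p (S n) m - pbinom_pmf p n m).
  assert (Hd : ex_series d).
  { apply (ex_series_le d p); auto. intros n.
    change (norm (d n)) with (Rabs (d n)). unfold d. rewrite pbinom_S. unfold bconv.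
    pose proof (Hp n). pose proof (pb_bounds p Hp n m).
    assert (0 <= prv (pbinom_pmf p n) m <= 1) by (destruct m; simpl; [lra| apply pb_bounds; auto]).
    replace ((1 - p n) * pbinom_pmf p n m + p n * prv (pbinom_pmf p n) m - pbinom_pmf p n m)
      with (p n * (prv (pbinom_pmf p n) m - pbinom_pmf p n m)) by ring.
    rewrite Rabs_mult, Rabs_pos_eq by lra.
    assert (Rabs (prv (pbinom_pmf p n) m - pbinom_pmf p n m) <= 1) by (apply Rabs_le; lra).
    nra. }
  exists (pbinom_pmf p 0 m + Series d).
  apply is_lim_seq_incr_1.
  assert (HS : is_lim_seq (sum_n d) (Series d)) by (exact (Series_correct d Hd)).
  apply (is_lim_seq_ext (fun n => pbinom_pmf p 0 m + sum_n d n)).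
  - intros n. rewrite sum_n_Reals. induction n as [|n IH].
    + change (sum_f_R0 d 0) with (d 0%nat). unfold d. ring.
    + rewrite tech5, <- Rplus_assoc, IH. unfold d. ring.
  - apply (is_lim_seq_plus' _ _ _ _ (is_lim_seq_const _) HS).
Qed.

Lemma poisson_cont (t : nat -> R) lam m : is_lim_seq t 0 ->
  is_lim_seq (fun n => poisson_pmf (lam + t n) m) (poisson_pmf lam m).
Proof.
  intros Ht.
  assert (Hc : continuity_pt (fun x => poisson_pmf x m) lam).
  { unfold poisson_pmf. reg. }
  assert (Hl : is_lim_seq (fun n => lam + t n) lam).
  { pose proof (is_lim_seq_plus' _ _ _ _ (is_lim_seq_const lam) Ht) as H.
    rewrite Rplus_0_r in H. exact H. }
  exact (is_lim_seq_continuous _ _ _ Hc Hl).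
Qed.

Lemma star_perturb a a' b k : (forall j, 0 <= b j <= 1) ->
  Rabs (star a' b k - star a b k) <= sum_f_R0 (fun j => Rabs (a' (k - j)%nat - a (k - j)%nat)) k.
Proof.
  intros Hb. unfold star. rewrite <- minus_sum.
  eapply Rle_trans; [apply sum_f_R0_triangle|].
  apply sum_Rle. intros i Hi.
  replace (a' (k - i)%nat * b i - a (k - i)%nat * b i) with ((a' (k - i)%nat - a (k - i)%nat) * b i) by ring.
  rewrite Rabs_mult. pose proof (Hb i). rewrite (Rabs_pos_eq (b i)) by lra.
  pose proof (Rabs_pos (a' (k - i)%nat - a (k - i)%nat)). nra.
Qed.

Lemma sumL_lst p n : sumL (lst p (S n)) = sum_f_R0 p n.
Proof.
  induction n as [|n IH]; [simpl; ring|].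
  change (sumL (lst p (S (S n)))) with (p (S n) + sumL (lst p (S n))). rewrite IH. simpl. ring.
Qed.

Lemma inU_lst p n : (forall i, 0 <= p i <= 1) -> inU (lst p n).
Proof. intros Hp. induction n; simpl; constructor; auto. Qed.

Lemma mode_inf lam p k : in_nabla (lam, p) -> lam + Series p = INR k ->
  forall j, Defs.f j (lam, p) <= Defs.f k (lam, p).
Proof.
  intros [Hl [Hp0 [Hdec [Hpos Hser]]]] Hm j.
  assert (Hp : forall i, 0 <= p i <= 1).
  { intros i. split; auto. induction i; auto. specialize (Hdec i). lra. }
  assert (HS0 : is_lim_seq (sum_n p) (Series p)) by (exact (Series_correct p Hser)).
  assert (HS : is_lim_seq (fun n => sumL (lst p n)) (Series p)).
  { apply is_lim_seq_incr_1. apply (is_lim_seq_ext (sum_n p)); auto.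
    intros n. rewrite sumL_lst, sum_n_Reals. reflexivity. }
  set (t := fun n => Series p - sumL (lst p n)).
  assert (Ht0 : forall n, 0 <= t n).
  { intros n. unfold t. assert (sumL (lst p n) <= Series p); [|lra].
    apply (is_lim_seq_incr_compare _ _ HS). intros m. simpl. pose proof (Hpos m). lra. }
  assert (Ht : is_lim_seq t 0).
  { unfold t. replace 0 with (Series p - Series p) by ring.
    apply (is_lim_seq_minus' _ _ _ _ (is_lim_seq_const _) HS). }
  set (Lf := fun m => real (Lim_seq (fun n => pbinom_pmf p n m))).
  assert (HLf : forall m, is_lim_seq (fun n => pbinom_pmf p n m) (Lf m)).
  { intros m. destruct (pb_lim p Hp Hser m) as [L HL]. unfold Lf.
    rewrite (is_lim_seq_unique _ _ HL). exact HL. }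
  assert (Hfin : forall m, is_lim_seq (fun n => fin_pmf lam p n m) (star (poisson_pmf lam) Lf m)).
  { intros m. unfold fin_pmf, star.
    apply (lim_sum (fun n j => poisson_pmf lam (m - j) * pbinom_pmf p n j)
                   (fun j => poisson_pmf lam (m - j) * Lf j)).
    intros i. apply (is_lim_seq_mult' _ _ _ _ (is_lim_seq_const _) (HLf i)). }
  assert (Hf : forall m, Defs.f m (lam, p) = star (poisson_pmf lam) Lf m).
  { intros m. unfold Defs.f. simpl fst; simpl snd. rewrite (is_lim_seq_unique _ _ (Hfin m)). reflexivity. }
  set (g := fun n m => fin_pmf (lam + t n) p n m).
  assert (Hg : forall m, is_lim_seq (fun n => g n m) (star (poisson_pmf lam) Lf m)).
  { intros m.
    set (D := fun n => sum_f_R0 (fun i => Rabs (poisson_pmf (lam + t n) (m - i)%nat - poisson_pmf lam (m - i)%nat)) m).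
    assert (HD : is_lim_seq D 0).
    { assert (E0 : sum_f_R0 (fun _ : nat => 0) m = 0) by (rewrite sum_cte; ring).
      assert (HT : forall i, is_lim_seq (fun n => Rabs (poisson_pmf (lam + t n) (m - i)%nat - poisson_pmf lam (m - i)%nat)) 0).
      { intros i. replace 0 with (Rabs (poisson_pmf lam (m - i)%nat - poisson_pmf lam (m - i)%nat))
          by (unfold Rminus; rewrite Rplus_opp_r; apply Rabs_R0).
        apply (is_lim_seq_abs _ (Finite _)).
        apply (is_lim_seq_minus' _ _ _ _ (poisson_cont t lam (m - i) Ht) (is_lim_seq_const _)). }
      pose proof (lim_sum (fun n i => Rabs (poisson_pmf (lam + t n) (m - i)%nat - poisson_pmf lam (m - i)%nat))
                     (fun _ => 0) HT m) as HL.
      rewrite E0 in HL. exact HL. }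
    assert (Hdiff : is_lim_seq (fun n => g n m - fin_pmf lam p n m) 0).
    { apply (is_lim_seq_le_le (fun n => - D n) _ D).
      - intros n. unfold g, fin_pmf.
        pose proof (star_perturb (poisson_pmf lam) (poisson_pmf (lam + t n)) (pbinom_pmf p n) m
                      (pb_bounds p Hp n)) as Hb. unfold star in Hb. unfold D.
        apply Rabs_le_between in Hb. lra.
      - replace (Finite 0) with (Rbar_opp (Finite 0)) by (simpl; f_equal; ring).
        apply (proj1 (is_lim_seq_opp D 0)). exact HD.
      - exact HD. }
    apply (is_lim_seq_ext (fun n => fin_pmf lam p n m + (g n m - fin_pmf lam p n m))).
    { intros; ring. }
    replace (star (poisson_pmf lam) Lf m) with (star (poisson_pmf lam) Lf m + 0) by ring.
    apply (is_lim_seq_plus' _ _ _ _ (Hfin m) Hdiff). }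
  assert (Hle : forall n, g n j <= g n k).
  { intros n. unfold g. rewrite !fin_plaw.
    apply mode_fin.
    - pose proof (Ht0 n). lra.
    - apply inU_lst; auto.
    - unfold t. rewrite <- Hm. ring. }
  rewrite !Hf.
  pose proof (is_lim_seq_le _ _ _ _ Hle (Hg j) (Hg k)) as R. simpl in R. exact R.
Qed.

Theorem proposition2 (PP : param -> Prop) :
  (forall th, PP th -> in_nabla th) ->
  (forall k : nat,
     (exists th, is_maximiser PP k th) /\
     (forall th, is_maximiser PP k th -> M k th)) ->
  cross_modal PP.
Proof.
  intros _ H k. destruct (H k) as [Hex Hmax]. split; [exact Hex|].
  intros th Hth. destruct (Hmax th Hth) as [Hn Hm].
  destruct th as [lam p]. simpl in Hm.
  intros j. apply (mode_inf lam p k Hn Hm).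
Qed.
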